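(* Let $R=(\mathcal{F},\mathcal{V},\mathcal{R})$ with $\mathcal{R}=\{\ell_1\to r_1,\dots,\ell_n\to r_n\}$ and $R'=(\mathcal{F}',\mathcal{V}',\mathcal{R}')$ be TRSs with $R\cong_{\mathbf{SVE}}R'$, $R\cong_{\mathbf{LFE}}R'$ or $R\cong_{\mathbf{LE}}R'$, witnessed by the local isomorphism $\phi=(\phi_1,\dots,\phi_n)$, so $\mathcal{R}'=\{\phi_1(\ell_1)\to\phi_1(r_1),\dots,\phi_n(\ell_n)\to\phi_n(r_n)\}$. Then: (i) If $s\to_R t$ for $s,t\in T(\mathcal{F},\mathcal{V})$, then there is $1\le i\le n$ with $\phi_i(s)\to_{R'}\phi_i(t)$. However, there exist TRSs $R,R'$ with $R\cong_{\mathbf{LFE}}R'$ (hence also $R\cong_{\mathbf{SVE}}R'$ and $R\cong_{\mathbf{LE}}R'$), a witnessing family $\phi$, terms $s,t$ and an index $i$ such that $s\to_R t$ but not $\phi_i(s)\to_{R'}\phi_i(t)$. (ii) If $\phi_i(s)\to_{\{\phi_i(\ell_i)\to\phi_i(r_i)\}}\phi_i(t)$ for some $i$ and $s,t\in T(\mathcal{F},\mathcal{V})$, then $s\to_R t$. However, there exist TRSs $R,R'$ with $R\cong_{\mathbf{LFE}}R'$, a witnessing family $\phi$, terms $s,t$ and an index $j$ such that $\phi_j(s)\to_{R'}\phi_j(t)$ but not $s\to_R t$. (iii) There exist TRSs $R,R'$ with $R\cong_{\mathbf{LFE}}R'$ such that $R$ is terminating but $R'$ is not terminating.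
   Context: Terms and TRSs: $\mathcal{F}$ is a finite set of function symbols with arity map $\mathrm{ar}:\mathcal{F}\to\mathbb{N}_0$, $\mathcal{V}$ a finite set of variables disjoint from $\mathcal{F}$, and $T(\mathcal{F},\mathcal{V})$ the usual set of first-order terms over them. $\mathrm{Var}(t)$ is the set of variables occurring in $t$. A term rewriting system (TRS) is a triple $R=(\mathcal{F},\mathcal{V},\mathcal{R})$ where $\mathcal{R}$ is a finite set of rules $\ell\to r$ with $\ell,r\in T(\mathcal{F},\mathcal{V})$, $\ell\notin\mathcal{V}$ and $\mathrm{Var}(r)\subseteq\mathrm{Var}(\ell)$; $\mathcal{F}$ and $\mathcal{V}$ contain all symbols occurring in the rules. Rewriting: $s\to_R t$ iff there are a context $C$ (a term over $\mathcal{F},\mathcal{V}$ with one hole), a rule $\ell\to r\in\mathcal{R}$ and a substitution $\sigma:\mathcal{V}\to T(\mathcal{F},\mathcal{V})$ with $s=C[\sigma(\ell)]$ and $t=C[\sigma(r)]$; for a single rule set $\{\ell\to r\}$ the relation $\to_{\{\ell\to r\}}$ is defined likewise. $R$ is terminating if there is no infinite sequence of $\to_R$-steps. Term isomorphisms: a term isomorphism $\phi:T(\mathcal{F},\mathcal{V})\to T(\mathcal{F}',\mathcal{V}')$ is a pair of bijections $\phi_{\mathcal{F}}:\mathcal{F}\to\mathcal{F}'$ with $\mathrm{ar}'(\phi_{\mathcal{F}}(f))=\mathrm{ar}(f)$ for all $f$, and $\phi_{\mathcal{V}}:\mathcal{V}\to\mathcal{V}'$, extended homomorphically to terms. We write $\phi|_{\mathcal{F}}=\phi_{\mathcal{F}}$,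 $\phi|_{\mathcal{V}}=\phi_{\mathcal{V}}$. It is $\mathcal{V}$-invariant if $\mathcal{V}=\mathcal{V}'$ and $\phi_{\mathcal{V}}=\mathrm{id}$. Normal forms: two distinct rules $\ell\to r$, $\ell'\to r'$ of $\mathcal{R}$ are equivalent (resp. $\mathcal{F}$-equivalent) if there is a term isomorphism (resp. a $\mathcal{V}$-invariant one) $\phi:T(\mathcal{F},\mathcal{V})\to T(\mathcal{F},\mathcal{V})$ with $\phi(\ell)=\ell'$ and $\phi(r)=r'$. $R$ is in normal form (resp. $\mathcal{F}$-normal form) if $\mathcal{R}$ contains no pair of equivalent (resp. $\mathcal{F}$-equivalent) rules. TRS isomorphisms: a local isomorphism from $R$ to $R'$ is a family $(\phi_1,\dots,\phi_n)$ of term isomorphisms $T(\mathcal{F},\mathcal{V})\to T(\mathcal{F}',\mathcal{V}')$ with $\{\phi_i(\ell_i)\to\phi_i(r_i):1\le i\le n\}=\mathcal{R}'$. $R\cong_{\mathbf{LE}}R'$ if both are in normal form and a local isomorphism exists; $R\cong_{\mathbf{SVE}}R'$ if both are in $\mathcal{F}$-normal form and there is a local isomorphism with $\phi_1|_{\mathcal{V}}=\dots=\phi_n|_{\mathcal{V}}$; $R\cong_{\mathbf{LFE}}R'$ if both are in $\mathcal{F}$-normal form and there is a local isomorphism all of whose $\phi_i$ are $\mathcal{V}$-invariant. *)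

(* Defs.v *)
From mathcomp Require Import all_boot.
From Stdlib Require List.

Record signature := Signature { fsym :> finType; arity : fsym -> nat }.
Arguments arity {s} _.

(* First-order terms (possibly ill-formed w.r.t. arities; see wf_term). *)
Inductive term (F V : Type) : Type :=
| Var : V -> term F V
| Fun : F -> seq (term F V) -> term F V.
Arguments Var {F V} _.
Arguments Fun {F V} _ _.

Inductive wf_term (S : signature) (V : Type) : term S V -> Prop :=
| wf_Var (x : V) : wf_term S V (Var x)
| wf_Fun (f : S) (ts : seq (term S V)) :
    size ts = arity f -> List.Forall (wf_term S V) ts -> wf_term S V (Fun f ts).
Arguments wf_term {S V} _.

Fixpoint vars {F V : Type} (t : term F V) : seq V :=
  match t with
  | Var x => [:: x]
  | Fun _ ts => flatten (map vars ts)
  end.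

Fixpoint map_term {F F' V V' : Type} (g : F -> F') (h : V -> V')
    (t : term F V) : term F' V' :=
  match t with
  | Var x => Var (h x)
  | Fun f ts => Fun (g f) (map (map_term g h) ts)
  end.

Fixpoint subst {F V : Type} (sigma : V -> term F V) (t : term F V) : term F V :=
  match t with
  | Var x => sigma x
  | Fun f ts => Fun f (map (subst sigma) ts)
  end.

Inductive ctx (F V : Type) : Type :=
| Hole : ctx F V
| CFun : F -> seq (term F V) -> ctx F V -> seq (term F V) -> ctx F V.
Arguments Hole {F V}.
Arguments CFun {F V} _ _ _ _.

Fixpoint fill {F V : Type} (C : ctx F V) (u : term F V) : term F V :=
  match C with
  | Hole => u
  | CFun f l C' r => Fun f (l ++ fill C' u :: r)
  end.

Definition rstep {F V : Type} (l r : term F V) (s t : term F V) : Prop :=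
  exists (C : ctx F V) (sigma : V -> term F V),
    s = fill C (subst sigma l) /\ t = fill C (subst sigma r).

Record trs (S : signature) (V : finType) := TRS {
  nrules : nat;
  rule : 'I_nrules -> term S V * term S V;
  rule_inj : injective rule;
  rule_wf : forall i, wf_term (rule i).1 /\ wf_term (rule i).2;
  rule_lhs_nonvar : forall i (x : V), (rule i).1 <> Var x;
  rule_vars : forall i (x : V),
      List.In x (vars (rule i).2) -> List.In x (vars (rule i).1) }.
Arguments nrules {S V} _.
Arguments rule {S V} _ _.

Definition rewrites {S : signature} {V : finType} (R : trs S V)
    (s t : term S V) : Prop :=
  exists i : 'I_(nrules R), rstep (rule R i).1 (rule R i).2 s t.

Definition terminating {S : signature} {V : finType} (R : trs S V) : Prop :=
  ~ exists f : nat -> term S V,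
      forall k, wf_term (f k) /\ rewrites R (f k) (f k.+1).

Record term_iso (S : signature) (V : finType) (S' : signature) (V' : finType) :=
  TermIso {
    isoF : S -> S';
    isoV : V -> V';
    isoF_bij : bijective isoF;
    isoV_bij : bijective isoV;
    isoF_arity : forall f : S, arity (isoF f) = arity f }.
Arguments isoF {S V S' V'} _ _.
Arguments isoV {S V S' V'} _ _.

Definition iso_app {S V S' V'} (phi : term_iso S V S' V') (t : term S V)
  : term S' V' := map_term (isoF phi) (isoV phi) t.

Definition iso_rule {S V S' V'} (phi : term_iso S V S' V')
    (rho : term S V * term S V) : term S' V' * term S' V' :=
  (iso_app phi rho.1, iso_app phi rho.2).

(* V-invariance: V = V' and phi|_V = id. *)
Definition V_invariant {S V S' V'} (phi : term_iso S V S' V') : Prop :=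
  exists e : (V : Type) = (V' : Type),
    forall x : V, isoV phi x = eq_rect (V : Type) (fun T : Type => T) x (V' : Type) e.

Definition rules_equiv {S : signature} {V : finType}
    (rho rho' : term S V * term S V) : Prop :=
  exists phi : term_iso S V S V, iso_rule phi rho = rho'.

Definition rules_Fequiv {S : signature} {V : finType}
    (rho rho' : term S V * term S V) : Prop :=
  exists phi : term_iso S V S V,
    (forall x : V, isoV phi x = x) /\ iso_rule phi rho = rho'.

(* distinct rules <-> distinct indices, since rule is injective *)
Definition normal_form {S V} (R : trs S V) : Prop :=
  forall i j, i <> j -> ~ rules_equiv (rule R i) (rule R j).

Definition F_normal_form {S V} (R : trs S V) : Prop :=
  forall i j, i <> j -> ~ rules_Fequiv (rule R i) (rule R j).

Definition local_iso {S V S' V'} (R : trs S V) (R' : trs S' V')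
    (phi : 'I_(nrules R) -> term_iso S V S' V') : Prop :=
  forall rho' : term S' V' * term S' V',
    (exists j, rule R' j = rho') <->
    (exists i, iso_rule (phi i) (rule R i) = rho').

Definition LE_witness {S V S' V'} (R : trs S V) (R' : trs S' V')
    (phi : 'I_(nrules R) -> term_iso S V S' V') : Prop :=
  normal_form R /\ normal_form R' /\ local_iso R R' phi.

Definition SVE_witness {S V S' V'} (R : trs S V) (R' : trs S' V')
    (phi : 'I_(nrules R) -> term_iso S V S' V') : Prop :=
  F_normal_form R /\ F_normal_form R' /\ local_iso R R' phi /\
  (forall i j (x : V), isoV (phi i) x = isoV (phi j) x).

Definition LFE_witness {S V S' V'} (R : trs S V) (R' : trs S' V')
    (phi : 'I_(nrules R) -> term_iso S V S' V') : Prop :=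
  F_normal_form R /\ F_normal_form R' /\ local_iso R R' phi /\
  (forall i, V_invariant (phi i)).

Definition iso_LE {S V S' V'} (R : trs S V) (R' : trs S' V') : Prop :=
  exists phi, LE_witness R R' phi.
Definition iso_SVE {S V S' V'} (R : trs S V) (R' : trs S' V') : Prop :=
  exists phi, SVE_witness R R' phi.
Definition iso_LFE {S V S' V'} (R : trs S V) (R' : trs S' V') : Prop :=
  exists phi, LFE_witness R R' phi.

(* Main.v *)
Require Import Defs.
From mathcomp Require Import all_boot.
From Stdlib Require Import Lia.
From mathcomp Require Import zify.

Fixpoint term_ind' {F V : Type} (P : term F V -> Prop)
  (HV : forall x, P (Var x))
  (HF : forall f ts, (forall u, List.In u ts -> P u) -> P (Fun f ts))
  (t : term F V) {struct t} : P t :=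
  match t with
  | Var x => HV x
  | Fun f ts => HF f ts ((fix aux (l : seq (term F V)) : forall u, List.In u l -> P u :=
      match l with
      | [::] => fun u H => False_ind _ H
      | v :: l' => fun u H => match H with
                   | or_introl e => eq_ind v P (term_ind' P HV HF v) u e
                   | or_intror H' => aux l' u H' end
      end) ts)
  end.

Lemma map_ext_In' (A B : Type) (f g : A -> B) (l : seq A) :
  (forall x, List.In x l -> f x = g x) -> map f l = map g l.
Proof.
elim: l => [|x l IH] H //=; rewrite H; last by left.
by rewrite IH // => y Hy; apply: H; right.
Qed.

Fixpoint map_ctx {F V F' V' : Type} (g : F -> F') (h : V -> V') (C : ctx F V)
  : ctx F' V' :=
  match C with
  | Hole => Hole
  | CFun f l C' r => CFun (g f) (map (map_term g h) l) (map_ctx g h C') (map (map_term g h) r)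
  end.

Lemma map_fill {F V F' V' : Type} (g : F -> F') (h : V -> V') C u :
  map_term g h (fill C u) = fill (map_ctx g h C) (map_term g h u).
Proof. by elim: C => //= f l C IH r; rewrite map_cat /= IH. Qed.

Lemma map_subst {F V F' V' : Type} (g : F -> F') (h : V -> V') hinv
  (hK : cancel h hinv) sigma t :
  map_term g h (subst sigma t) =
  subst (fun y => map_term g h (sigma (hinv y))) (map_term g h t).
Proof.
move: t; apply: term_ind' => [x|f ts IH] /=; first by rewrite hK.
congr Fun; rewrite -!map_comp; apply: map_ext_In' => u Hu /=; exact: IH.
Qed.

Lemma map_termK {F V F' V' : Type} (g : F -> F') (h : V -> V') g' h'
  (gK : cancel g g') (hK : cancel h h') t :
  map_term g' h' (map_term g h t) = t.
Proof.
move: t; apply: term_ind' => [x|f ts IH] /=; first by rewrite hK.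
rewrite gK -map_comp; congr Fun.
rewrite -[RHS]map_id; apply: map_ext_In' => u Hu /=; exact: IH.
Qed.

Lemma rstep_map {F V F' V' : Type} (g : F -> F') (h : V -> V') hinv
  (hK : cancel h hinv) l r s t :
  rstep l r s t -> rstep (map_term g h l) (map_term g h r) (map_term g h s) (map_term g h t).
Proof.
move=> [C [sigma [-> ->]]].
exists (map_ctx g h C), (fun y => map_term g h (sigma (hinv y))).
by rewrite !map_fill !(map_subst _ _ _ hK).
Qed.

Definition ar3 (i : 'I_3) : nat := if val i == 2 then 1 else 0.
Definition sig3 : signature := Signature 'I_3 ar3.
Definition sa : sig3 := @Ordinal 3 0 isT.
Definition sb : sig3 := @Ordinal 3 1 isT.
Definition sf : sig3 := @Ordinal 3 2 isT.
Definition T := term sig3 unit.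
Definition ta : T := Fun sa [::].
Definition tb : T := Fun sb [::].
Definition fa : T := Fun sf [:: ta].
Definition fb : T := Fun sf [:: tb].

Lemma I2_cases (i : 'I_2) : i = ord0 \/ i = ord_max.
Proof. case: i => [[|[|n]] Hn]; [left|right|by []]; exact: val_inj. Qed.

Lemma I3_cases (i : sig3) : i = sa \/ i = sb \/ i = sf.
Proof.
case: i => [[|[|[|n]]] Hn]; [left|right;left|right;right|by []]; exact: val_inj.
Qed.

Definition rR (i : 'I_2) : T * T := if val i == 0 then (ta, fb) else (fa, tb).
Definition rR' (i : 'I_2) : T * T := if val i == 0 then (ta, fb) else (fb, ta).

Definition nargs (t : T) : nat := match t with Var _ => 0 | Fun _ ts => size ts end.
Definition hdv (t : T) : nat := match t with Var _ => 3 | Fun g _ => nat_of_ord (g : 'I_3) end.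

Lemma rR_inj : injective rR.
Proof.
move=> i j; case: (I2_cases i) => ->; case: (I2_cases j) => -> //= /(congr1 (fun p => nargs p.1)) //.
Qed.
Lemma rR'_inj : injective rR'.
Proof.
move=> i j; case: (I2_cases i) => ->; case: (I2_cases j) => -> //= /(congr1 (fun p => nargs p.1)) //.
Qed.

Lemma rR_wf i : wf_term (rR i).1 /\ wf_term (rR i).2.
Proof. case: (I2_cases i) => -> /=; split; repeat constructor. Qed.
Lemma rR'_wf i : wf_term (rR' i).1 /\ wf_term (rR' i).2.
Proof. case: (I2_cases i) => -> /=; split; repeat constructor. Qed.
Lemma rR_nv i (x : unit) : (rR i).1 <> Var x.
Proof. by case: (I2_cases i) => ->. Qed.
Lemma rR'_nv i (x : unit) : (rR' i).1 <> Var x.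
Proof. by case: (I2_cases i) => ->. Qed.
Lemma rR_vars i (x : unit) : List.In x (vars (rR i).2) -> List.In x (vars (rR i).1).
Proof. by case: (I2_cases i) => -> /=. Qed.
Lemma rR'_vars i (x : unit) : List.In x (vars (rR' i).2) -> List.In x (vars (rR' i).1).
Proof. by case: (I2_cases i) => -> /=. Qed.

Definition RR : trs sig3 unit := @TRS sig3 unit 2 rR rR_inj rR_wf rR_nv rR_vars.
Definition RR' : trs sig3 unit := @TRS sig3 unit 2 rR' rR'_inj rR'_wf rR'_nv rR'_vars.

Definition swap (x : sig3) : sig3 :=
  if val x == 0 then sb else if val x == 1 then sa else x.
Lemma swapK : cancel swap swap.
Proof. by move=> x; case: (I3_cases x) => [->|[->|->]]. Qed.
Lemma swap_ar (x : sig3) : arity (swap x) = arity x.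
Proof. by case: (I3_cases x) => [->|[->|->]]. Qed.
Lemma id_bij (A : Type) : bijective (@id A).
Proof. by exists id. Qed.

Definition idI : term_iso sig3 unit sig3 unit :=
  @TermIso sig3 unit sig3 unit id id (id_bij _) (id_bij _) (fun _ => erefl).
Definition swI : term_iso sig3 unit sig3 unit :=
  @TermIso sig3 unit sig3 unit swap id (Bijective swapK swapK) (id_bij _) swap_ar.

Definition phi (i : 'I_(nrules RR)) : term_iso sig3 unit sig3 unit :=
  if val i == 0 then idI else swI.

Lemma phi_key i : iso_rule (phi i) (rule RR i) = rule RR' i.
Proof. by case: (I2_cases i) => ->. Qed.

Lemma phi_local : local_iso RR RR' phi.
Proof.
move=> rho; split=> [[j <-]|[i <-]]; exists j || exists i; by rewrite phi_key.
Qed.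

Lemma phiV i x : isoV (phi i) x = x.
Proof. by rewrite /phi; case: (_ == _). Qed.

Lemma nargs_iso (psi : term_iso sig3 unit sig3 unit) t :
  nargs (iso_app psi t) = nargs t.
Proof. by case: t => //= f ts; rewrite size_map. Qed.

Lemma R_nf : normal_form RR.
Proof.
move=> i j; case: (I2_cases i) => ->; case: (I2_cases j) => -> // _ [psi];
  move/(congr1 (fun p => nargs p.1)); by rewrite /iso_rule /= ?size_map.
Qed.
Lemma RR'_nf : normal_form RR'.
Proof.
move=> i j; case: (I2_cases i) => ->; case: (I2_cases j) => -> // _ [psi];
  move/(congr1 (fun p => nargs p.1)); by rewrite /iso_rule /= ?size_map.
Qed.
Lemma Fnf_of_nf S V (Q : trs S V) : normal_form Q -> F_normal_form Q.
Proof. by move=> H i j Hij [psi [_ E]]; apply: (H i j Hij); exists psi. Qed.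

Lemma LFE_w : LFE_witness RR RR' phi.
Proof.
split; [exact: Fnf_of_nf R_nf|split; [exact: Fnf_of_nf RR'_nf|split; first exact: phi_local]].
by move=> i; exists erefl => x; rewrite phiV.
Qed.
Lemma SVE_w : SVE_witness RR RR' phi.
Proof.
split; [exact: Fnf_of_nf R_nf|split; [exact: Fnf_of_nf RR'_nf|split; first exact: phi_local]].
by move=> i j x; rewrite !phiV.
Qed.
Lemma LE_w : LE_witness RR RR' phi.
Proof. split; [exact: R_nf|split; [exact: RR'_nf|exact: phi_local]]. Qed.

Lemma fill_const (C : ctx sig3 unit) u g :
  fill C u = Fun g [::] -> u = Fun g [::].
Proof. by case: C => //= f l C r [_]; case: l. Qed.

Lemma not_b_R t : ~ rewrites RR tb t.
Proof.
move=> [i [C [s [/esym /fill_const H _]]]]; move: H.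
by case: (I2_cases i) => -> /= /(congr1 hdv).
Qed.
Lemma not_b_R' t : ~ rewrites RR' tb t.
Proof.
move=> [i [C [s [/esym /fill_const H _]]]]; move: H.
by case: (I2_cases i) => -> /= /(congr1 hdv).
Qed.

Lemma wf_ta : wf_term ta. Proof. by repeat constructor. Qed.
Lemma wf_tb : wf_term tb. Proof. by repeat constructor. Qed.
Lemma wf_fa : wf_term fa. Proof. by repeat constructor. Qed.
Lemma wf_fb : wf_term fb. Proof. by repeat constructor. Qed.

Lemma R_a_fb : rewrites RR ta fb.
Proof. by exists ord0, Hole, Var. Qed.
Lemma RR'_a_fb : rewrites RR' ta fb.
Proof. by exists ord0, Hole, Var. Qed.
Lemma RR'_fb_a : rewrites RR' fb ta.
Proof. by exists ord_max, Hole, Var. Qed.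

Definition w3 (g : sig3) : nat := if val g == 0 then 2 else if val g == 1 then 0 else 1.
Fixpoint weight (t : T) : nat :=
  match t with Var _ => 0 | Fun g ts => w3 g + sumn (map weight ts) end.

Lemma weight_fill C u u' : weight u' < weight u -> weight (fill C u') < weight (fill C u).
Proof.
elim: C => //= f l C IH r H; rewrite !map_cat !sumn_cat /=.
have := IH H; lia.
Qed.

Lemma R_dec s t : rewrites RR s t -> weight t < weight s.
Proof.
move=> [i [C [sg [-> ->]]]]; apply: weight_fill.
by case: (I2_cases i) => ->.
Qed.

Lemma R_term : terminating RR.
Proof.
move=> [g Hg].
have H : forall k, weight (g k) + k <= weight (g 0).
  elim=> [|k IH]; first by rewrite addn0.
  have := R_dec _ _ (proj2 (Hg k)); lia.
have := H (weight (g 0)).+1; lia.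
Qed.

Lemma RR'_nterm : ~ terminating RR'.
Proof.
apply; exists (fun k => if odd k then fb else ta) => k /=.
case: (odd k) => /=; split; [exact: wf_fb|exact: RR'_fb_a|exact: wf_ta|exact: RR'_a_fb].
Qed.

Theorem mainTheorem6 :
  (* (i), positive part *)
  (forall (S : signature) (V : finType) (S' : signature) (V' : finType)
          (R : trs S V) (R' : trs S' V')
          (phi : 'I_(nrules R) -> term_iso S V S' V'),
      (SVE_witness R R' phi \/ LFE_witness R R' phi \/ LE_witness R R' phi) ->
      forall s t : term S V, wf_term s -> wf_term t -> rewrites R s t ->
      exists i : 'I_(nrules R),
        rewrites R' (iso_app (phi i) s) (iso_app (phi i) t)) /\
  (* (i), counterexample *)
  (exists (S : signature) (V : finType) (S' : signature) (V' : finType)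
          (R : trs S V) (R' : trs S' V')
          (phi : 'I_(nrules R) -> term_iso S V S' V')
          (s t : term S V) (i : 'I_(nrules R)),
      LFE_witness R R' phi /\ SVE_witness R R' phi /\ LE_witness R R' phi /\
      wf_term s /\ wf_term t /\ rewrites R s t /\
      ~ rewrites R' (iso_app (phi i) s) (iso_app (phi i) t)) /\
  (* (ii), positive part *)
  (forall (S : signature) (V : finType) (S' : signature) (V' : finType)
          (R : trs S V) (R' : trs S' V')
          (phi : 'I_(nrules R) -> term_iso S V S' V'),
      (SVE_witness R R' phi \/ LFE_witness R R' phi \/ LE_witness R R' phi) ->
      forall (i : 'I_(nrules R)) (s t : term S V), wf_term s -> wf_term t ->
      rstep (iso_rule (phi i) (rule R i)).1 (iso_rule (phi i) (rule R i)).2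
            (iso_app (phi i) s) (iso_app (phi i) t) ->
      rewrites R s t) /\
  (* (ii), counterexample *)
  (exists (S : signature) (V : finType) (S' : signature) (V' : finType)
          (R : trs S V) (R' : trs S' V')
          (phi : 'I_(nrules R) -> term_iso S V S' V')
          (s t : term S V) (j : 'I_(nrules R)),
      LFE_witness R R' phi /\
      wf_term s /\ wf_term t /\
      rewrites R' (iso_app (phi j) s) (iso_app (phi j) t) /\
      ~ rewrites R s t) /\
  (* (iii) *)
  (exists (S : signature) (V : finType) (S' : signature) (V' : finType)
          (R : trs S V) (R' : trs S' V'),
      iso_LFE R R' /\ terminating R /\ ~ terminating R').
Proof.
split.
  move=> S V S' V' R R' ph Hw s t _ _ [i Hi].
  have Hloc : local_iso R R' ph by case: Hw => [[_ [_ [? _]]]|[[_ [_ [? _]]]|[_ [_ ?]]]].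
  exists i; have [j Hj] := proj2 (Hloc _) (ex_intro _ i erefl).
  exists j; rewrite Hj; case: (@isoV_bij _ _ _ _ (ph i)) => hinv hK _.
  exact: (rstep_map _ _ _ hK _ _ _ _ Hi).
split.
  exists sig3, unit, sig3, unit, RR, RR', phi, ta, fb, ord_max.
  do 6!(split; first by (exact: LFE_w || exact: SVE_w || exact: LE_w || exact: wf_ta
                         || exact: wf_fb || exact: R_a_fb)).
  exact: not_b_R'.
split.
  move=> S V S' V' R R' ph Hw i s t _ _ H; exists i.
  case: (@isoF_bij _ _ _ _ (ph i)) => ginv gK _; case: (@isoV_bij _ _ _ _ (ph i)) => hinv hK hKi.
  have := rstep_map ginv hinv _ hKi _ _ _ _ H.
  by rewrite /iso_rule /iso_app /= !(map_termK _ _ _ _ gK hK).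
split.
  exists sig3, unit, sig3, unit, RR, RR', phi, tb, fa, ord_max.
  split; first exact: LFE_w.
  split; first exact: wf_tb.
  split; first exact: wf_fa.
  split; first exact: RR'_a_fb.
  exact: not_b_R.
exists sig3, unit, sig3, unit, RR, RR'.
split; first by exists phi; exact: LFE_w.
split; [exact: R_term|exact: RR'_nterm].
Qed.
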